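(* Let $a>b>0$ and let $E$ be the ellipse $\frac{x^2}{a^2}+\frac{y^2}{b^2}=1$. For a 3-periodic billiard orbit $T$ in $E$, consider the Cosine Circle of the excentral triangle of $T$. Then this circle is the same for all 3-periodic orbits in $E$: its radius $r^*$ is constant, it is centered at the center $(0,0)$ of $E$, and it lies exterior to $E$ (i.e. $r^*>a$).
   Context: A 3-periodic billiard orbit in the ellipse $E$ is a nondegenerate triangle $P_1P_2P_3$ with all vertices on $E$ such that at each vertex $P_i$ the normal line to $E$ at $P_i$ bisects the interior angle of the triangle at $P_i$. The excentral triangle of $T$ has vertices at the three excenters of $T$. The Cosine Circle (second Lemoine circle) of a triangle $\Delta$ is the circle centered at the symmedian point $X_6$ of $\Delta$ passing through the six points where the three lines through $X_6$ parallel to the sides of the orthic triangle of $\Delta$ (the triangle of altitude feet) meet the sides of $\Delta$. *)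

(* Defs.v *)
From Stdlib Require Export Reals.
Open Scope R_scope.

Definition pt : Type := (R * R)%type.
Definition padd (p q : pt) : pt := (fst p + fst q, snd p + snd q).
Definition psub (p q : pt) : pt := (fst p - fst q, snd p - snd q).
Definition pscale (k : R) (p : pt) : pt := (k * fst p, k * snd p).
Definition dot (p q : pt) : R := fst p * fst q + snd p * snd q.
Definition cross (p q : pt) : R := fst p * snd q - snd p * fst q.
Definition norm (p : pt) : R := sqrt (dot p p).
Definition dist (p q : pt) : R := norm (psub p q).

Definition on_ellipse (a b : R) (P : pt) : Prop :=
  (fst P)^2 / a^2 + (snd P)^2 / b^2 = 1.

Definition ellipse_normal (a b : R) (P : pt) : pt := (fst P / a^2, snd P / b^2).

Definition int_bisector_dir (P Q S : pt) : pt :=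
  padd (pscale (/ dist Q P) (psub Q P)) (pscale (/ dist S P) (psub S P)).

(* The normal line to E at P coincides with the internal angle bisector line
   at P (both pass through P, so it suffices that directions are parallel). *)
Definition normal_bisects (a b : R) (P Q S : pt) : Prop :=
  cross (ellipse_normal a b P) (int_bisector_dir P Q S) = 0.

Definition nondegenerate (P1 P2 P3 : pt) : Prop :=
  cross (psub P2 P1) (psub P3 P1) <> 0.

Definition is_3_periodic (a b : R) (P1 P2 P3 : pt) : Prop :=
  nondegenerate P1 P2 P3 /\
  on_ellipse a b P1 /\ on_ellipse a b P2 /\ on_ellipse a b P3 /\
  normal_bisects a b P1 P2 P3 /\
  normal_bisects a b P2 P3 P1 /\
  normal_bisects a b P3 P1 P2.

Definition excenter (A B C : pt) : pt :=
  let la := dist B C in let lb := dist C A in let lc := dist A B in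
  pscale (/ (- la + lb + lc))
    (padd (padd (pscale (- la) A) (pscale lb B)) (pscale lc C)).

Definition symmedian (A B C : pt) : pt :=
  let la2 := dot (psub B C) (psub B C) in
  let lb2 := dot (psub C A) (psub C A) in
  let lc2 := dot (psub A B) (psub A B) in
  pscale (/ (la2 + lb2 + lc2))
    (padd (padd (pscale la2 A) (pscale lb2 B)) (pscale lc2 C)).

Definition foot (A B C : pt) : pt :=
  padd B (pscale (dot (psub A B) (psub C B) / dot (psub C B) (psub C B))
                 (psub C B)).

Definition on_line (X P d : pt) : Prop := cross (psub X P) d = 0.

Definition meets_on_circle (c : pt) (r : R) (K HU HW V S : pt) : Prop :=
  (exists X, on_line X K (psub HW HU) /\ on_line X V (psub S V)) /\
  (forall X, on_line X K (psub HW HU) -> on_line X V (psub S V) -> dist X c = r).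

(* The line parallel to the orthic side H_B H_C
   (antiparallel to BC) meets sides AB and AC, etc. *)
Definition is_cosine_circle (A B C : pt) (c : pt) (r : R) : Prop :=
  let HA := foot A B C in let HB := foot B C A in let HC := foot C A B in
  let K := symmedian A B C in
  c = K /\
  meets_on_circle c r K HB HC A B /\ meets_on_circle c r K HB HC A C /\
  meets_on_circle c r K HC HA B C /\ meets_on_circle c r K HC HA B A /\
  meets_on_circle c r K HA HB C A /\ meets_on_circle c r K HA HB C B.

(* Main.v *)
Require Import Defs.
From Stdlib Require Import Lra Psatz.
Open Scope R_scope.

Lemma sq_nonneg (x : R) : 0 <= x * x.
Proof. pose proof (Rle_0_sqr x). unfold Rsqr in H. exact H. Qed.

Lemma sqpos x : x <> 0 -> 0 < x * x.
Proof. intro H. destruct (Rlt_or_le 0 x); [nra|]. destruct (Req_dec x 0); [contradiction|nra]. Qed.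

Lemma sum2_pos x y : (x <> 0 \/ y <> 0) -> 0 < x*x + y*y.
Proof. intros [H|H]; pose proof (sqpos _ H); pose proof (sq_nonneg x); pose proof (sq_nonneg y); lra. Qed.

Lemma pt_neq (p q : pt) : p <> q -> (fst p - fst q <> 0 \/ snd p - snd q <> 0).
Proof.
  destruct p as [p1 p2], q as [q1 q2]; simpl; intros H.
  destruct (Req_dec p1 q1); destruct (Req_dec p2 q2); subst; try (left; lra); try (right; lra).
  congruence.
Qed.

Lemma dist_sym P Q : dist P Q = dist Q P.
Proof. destruct P as [p1 p2], Q as [q1 q2]; unfold dist, norm, dot, psub; simpl; f_equal; ring. Qed.

Lemma dist_sq P Q : dist P Q * dist P Q = (fst P - fst Q)*(fst P - fst Q) + (snd P - snd Q)*(snd P - snd Q).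
Proof. destruct P as [p1 p2], Q as [q1 q2]. unfold dist, norm, dot, psub; simpl. rewrite sqrt_sqrt; [ring | pose proof (sq_nonneg (p1-q1)); pose proof (sq_nonneg (p2-q2)); lra]. Qed.

Lemma dist_pos P Q : P <> Q -> 0 < dist P Q.
Proof. intros H. unfold dist, norm, dot, psub. apply sqrt_lt_R0. simpl.
  apply sum2_pos. apply pt_neq; auto. Qed.

Lemma bis_aux (nx ny ux uy vx vy : R) :
  ux*ux+uy*uy = 1 -> vx*vx+vy*vy = 1 -> (ux+vx <> 0 \/ uy+vy <> 0) ->
  nx*(uy+vy) - ny*(ux+vx) = 0 -> nx*(ux-vx) + ny*(uy-vy) = 0.
Proof.
  intros Hu Hv Hs Hc.
  assert (E: (nx*(ux-vx)+ny*(uy-vy))*((ux+vx)*(ux+vx)+(uy+vy)*(uy+vy)) =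
     (nx*(ux+vx)+ny*(uy+vy))*((ux-vx)*(ux+vx)+(uy-vy)*(uy+vy)) +
     (nx*(uy+vy)-ny*(ux+vx))*((ux-vx)*(uy+vy)-(uy-vy)*(ux+vx))) by ring.
  rewrite Hc in E.
  assert (E2: (ux-vx)*(ux+vx)+(uy-vy)*(uy+vy) = 0) by nra.
  rewrite E2 in E. pose proof (sum2_pos _ _ Hs).
  assert (T: (nx*(ux-vx)+ny*(uy-vy))*((ux+vx)*(ux+vx)+(uy+vy)*(uy+vy)) = 0) by lra.
  apply Rmult_integral in T. destruct T; lra.
Qed.

Lemma vertex_core (nx ny dqx dqy dsx dsy lq ls : R) :
  0 < lq -> 0 < ls -> lq*lq = dqx*dqx+dqy*dqy -> ls*ls = dsx*dsx+dsy*dsy ->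
  dqx*dsy - dqy*dsx <> 0 ->
  nx*(/lq*dqy + /ls*dsy) - ny*(/lq*dqx + /ls*dsx) = 0 ->
  (nx*dqx + ny*dqy)*ls = (nx*dsx+ny*dsy)*lq.
Proof.
  intros Hq Hs Eq Es Hnd Hc.
  set (ux := /lq*dqx) in *. set (uy := /lq*dqy) in *.
  set (vx := /ls*dsx) in *. set (vy := /ls*dsy) in *.
  assert (Dqx: dqx = lq*ux) by (unfold ux; field; lra).
  assert (Dqy: dqy = lq*uy) by (unfold uy; field; lra).
  assert (Dsx: dsx = ls*vx) by (unfold vx; field; lra).
  assert (Dsy: dsy = ls*vy) by (unfold vy; field; lra).
  clearbody ux uy vx vy. subst dqx dqy dsx dsy.
  assert (Hu: ux*ux+uy*uy = 1).
  { apply (Rmult_eq_reg_l (lq*lq)); [|nra]. lra. }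
  assert (Hv: vx*vx+vy*vy = 1).
  { apply (Rmult_eq_reg_l (ls*ls)); [|nra]. lra. }
  assert (Hsn: ux+vx <> 0 \/ uy+vy <> 0).
  { destruct (Req_dec (ux+vx) 0); destruct (Req_dec (uy+vy) 0); auto.
    exfalso. apply Hnd. replace vx with (-ux) by lra. replace vy with (-uy) by lra. ring. }
  pose proof (bis_aux _ _ _ _ _ _ Hu Hv Hsn Hc).
  replace ((nx * (lq * ux) + ny * (lq * uy)) * ls) with (lq*ls*(nx*ux+ny*uy)) by ring.
  replace ((nx * (ls * vx) + ny * (ls * vy)) * lq) with (lq*ls*(nx*vx+ny*vy)) by ring.
  f_equal. lra.
Qed.

Lemma nondeg_neq1 P Q S : nondegenerate P Q S -> Q <> P.
Proof. unfold nondegenerate, cross, psub; intros H E; subst; apply H; simpl; ring. Qed.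
Lemma nondeg_neq2 P Q S : nondegenerate P Q S -> S <> P.
Proof. unfold nondegenerate, cross, psub; intros H E; subst; apply H; simpl; ring. Qed.
Lemma nondeg_rot P Q S : nondegenerate P Q S -> nondegenerate Q S P.
Proof. unfold nondegenerate, cross, psub; simpl; intros H E; apply H; lra. Qed.

Lemma vertex_cond a b P Q S : nondegenerate P Q S -> normal_bisects a b P Q S ->
  dot (ellipse_normal a b P) (psub Q P) * dist S P = dot (ellipse_normal a b P) (psub S P) * dist Q P.
Proof.
  intros Hnd Hnb.
  pose proof (dist_pos _ _ (nondeg_neq1 _ _ _ Hnd)) as Hq.
  pose proof (dist_pos _ _ (nondeg_neq2 _ _ _ Hnd)) as Hs.
  pose proof (dist_sq Q P) as Eq. pose proof (dist_sq S P) as Es.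
  unfold normal_bisects, int_bisector_dir, nondegenerate in *.
  set (lq := dist Q P) in *. set (ls := dist S P) in *. clearbody lq ls.
  destruct P as [px py], Q as [qx qy], S as [sx sy].
  unfold cross, dot, padd, pscale, psub, ellipse_normal in *; simpl in *.
  apply vertex_core; auto.
Qed.

Lemma sq_lt (z t : R) : 0 <= z -> t*t < z*z -> t < z.
Proof. intros H1 H2. destruct (Rlt_or_le t z); auto. exfalso. nra. Qed.

Lemma tri_ineq A B C : nondegenerate A B C -> dist B C < dist C A + dist A B.
Proof.
  intros Hnd.
  pose proof (dist_pos _ _ (nondeg_neq1 _ _ _ Hnd)) as Hc. rewrite dist_sym in Hc.
  pose proof (dist_pos _ _ (nondeg_neq2 _ _ _ Hnd)) as Hb.
  pose proof (dist_sq B C) as Ea. pose proof (dist_sq C A) as Eb. pose proof (dist_sq A B) as Ec.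
  unfold nondegenerate in *.
  set (la := dist B C) in *. set (lb := dist C A) in *. set (lc := dist A B) in *.
  clearbody la lb lc.
  destruct A as [ax ay], B as [bx by_], C as [cx cy].
  unfold cross, psub in *; simpl in *.
  set (x1 := bx - ax) in *. set (x2 := by_ - ay) in *.
  set (y1 := cx - ax) in *. set (y2 := cy - ay) in *.
  assert (Ea' : la*la = lc*lc + lb*lb - 2*(x1*y1+x2*y2)) by (rewrite Ea, Eb, Ec; unfold x1,x2,y1,y2; ring).
  assert (Cr: 0 < (x1*y2 - x2*y1)*(x1*y2-x2*y1)) by (apply sqpos; auto).
  assert (L: (lb*lc)*(lb*lc) = (x1*y1+x2*y2)*(x1*y1+x2*y2) + (x1*y2 - x2*y1)*(x1*y2-x2*y1)).
  { replace ((lb*lc)*(lb*lc)) with ((lb*lb)*(lc*lc)) by ring. rewrite Eb, Ec. unfold x1,x2,y1,y2. ring. }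
  assert (P1: lb*lc > -(x1*y1+x2*y2)).
  { apply Rlt_gt. apply sq_lt. nra. nra. }
  assert (la*la < (lb+lc)*(lb+lc)) by nra.
  apply sq_lt; nra.
Qed.

Lemma exc_facts a b A B C : is_3_periodic a b A B C ->
  dot (ellipse_normal a b B) (excenter A B C) = 1 /\
  dot (ellipse_normal a b C) (excenter A B C) = 1 /\
  cross (ellipse_normal a b A) (psub (excenter A B C) A) = 0.
Proof.
  intros (Hnd & HA & HB & HC & NA & NB & NC).
  pose proof (nondeg_rot _ _ _ Hnd) as HndB. pose proof (nondeg_rot _ _ _ HndB) as HndC.
  pose proof (vertex_cond _ _ _ _ _ HndB NB) as VB.
  pose proof (vertex_cond _ _ _ _ _ HndC NC) as VC.
  rewrite (dist_sym C B) in VB. rewrite (dist_sym A C) in VC.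
  unfold normal_bisects, int_bisector_dir in NA. rewrite (dist_sym B A) in NA.
  pose proof (dist_pos _ _ (nondeg_neq1 _ _ _ Hnd)) as Hc. rewrite dist_sym in Hc.
  pose proof (dist_pos _ _ (nondeg_neq2 _ _ _ Hnd)) as Hb.
  pose proof (tri_ineq _ _ _ Hnd) as Ht.
  unfold excenter.
  set (la := dist B C) in *. set (lb := dist C A) in *. set (lc := dist A B) in *.
  clearbody la lb lc.
  destruct A as [ax ay], B as [bx by_], C as [cx cy].
  unfold on_ellipse, cross, dot, padd, pscale, psub, ellipse_normal in *; cbn [fst snd] in *.
  unfold Rdiv in *.
  set (ia := / a^2) in *. set (ib := / b^2) in *. clearbody ia ib.
  assert (Hs: -la+lb+lc <> 0) by lra.
  set (s := -la+lb+lc) in *.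
  split; [|split].
  - replace (bx * ia * (/ s * (- la * ax + lb * bx + lc * cx)) + by_ * ib * (/ s * (- la * ay + lb * by_ + lc * cy)))
      with ((bx * ia * (- la * ax + lb * bx + lc * cx) + by_ * ib * (- la * ay + lb * by_ + lc * cy)) / s) by (field; auto).
    replace (bx^2) with (bx*bx) in HB by ring. replace (by_^2) with (by_*by_) in HB by ring.
    assert (Num: bx * ia * (- la * ax + lb * bx + lc * cx) + by_ * ib * (- la * ay + lb * by_ + lc * cy) = s) by (unfold s; pose proof (f_equal (Rmult la) HB); pose proof (f_equal (Rmult lb) HB); pose proof (f_equal (Rmult lc) HB); pose proof (f_equal (Rmult la) HC); pose proof (f_equal (Rmult lb) HC); pose proof (f_equal (Rmult lc) HC); lra).
    rewrite Num. field. auto.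
  - replace (cx * ia * (/ s * (- la * ax + lb * bx + lc * cx)) + cy * ib * (/ s * (- la * ay + lb * by_ + lc * cy)))
      with ((cx * ia * (- la * ax + lb * bx + lc * cx) + cy * ib * (- la * ay + lb * by_ + lc * cy)) / s) by (field; auto).
    replace (cx^2) with (cx*cx) in HC by ring. replace (cy^2) with (cy*cy) in HC by ring.
    assert (Num: cx * ia * (- la * ax + lb * bx + lc * cx) + cy * ib * (- la * ay + lb * by_ + lc * cy) = s) by (unfold s; pose proof (f_equal (Rmult la) HB); pose proof (f_equal (Rmult lb) HB); pose proof (f_equal (Rmult lc) HB); pose proof (f_equal (Rmult la) HC); pose proof (f_equal (Rmult lb) HC); pose proof (f_equal (Rmult lc) HC); lra).
    rewrite Num. field. auto.
  - replace (ax * ia * (/ s * (- la * ay + lb * by_ + lc * cy) - ay) - ay * ib * (/ s * (- la * ax + lb * bx + lc * cx) - ax))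
      with ((ax * ia * ((- la * ay + lb * by_ + lc * cy) - s*ay) - ay * ib * ((- la * ax + lb * bx + lc * cx) - s*ax)) / s) by (field; auto).
    replace ((ax * ia * ((- la * ay + lb * by_ + lc * cy) - s*ay) - ay * ib * ((- la * ax + lb * bx + lc * cx) - s*ax)))
      with (lb * lc * (ax * ia * (/ lc * (by_ - ay) + / lb * (cy - ay)) - ay * ib * (/ lc * (bx - ax) + / lb * (cx - ax)))).
    rewrite NA. unfold Rdiv. ring.
    unfold s. field. split; lra.
Qed.

Lemma pair_rel (a b k Xi Yi Xj Yj : R) :
  Xi*Xi+Yi*Yi = 1 -> Xj*Xj+Yj*Yj = 1 -> (Xj-Xi <> 0 \/ Yj-Yi <> 0) ->
  ((Xj-Xi)*(Xj-Xi)+(Yj-Yi)*(Yj-Yi))*((Xj-Xi)*(Xj-Xi)+(Yj-Yi)*(Yj-Yi))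
    = k*(a*a*((Xj-Xi)*(Xj-Xi)) + b*b*((Yj-Yi)*(Yj-Yi))) ->
  (1 - k/4*(a*a-b*b))*(Xi*Xj) + (1 + k/4*(a*a-b*b))*(Yi*Yj) = 1 - k/4*(a*a+b*b).
Proof.
  intros Ui Uj Hne H.
  set (g := 1 - Xi*Xj - Yi*Yj).
  set (h := Xi*Xj - Yi*Yj).
  assert (Hq: (Xj-Xi)*(Xj-Xi)+(Yj-Yi)*(Yj-Yi) = 2*g) by (unfold g; lra).
  assert (Hd: a*a*((Xj-Xi)*(Xj-Xi)) + b*b*((Yj-Yi)*(Yj-Yi)) = g*((a*a+b*b) - (a*a-b*b)*h)).
  { assert (E: a*a*((Xj-Xi)*(Xj-Xi)) + b*b*((Yj-Yi)*(Yj-Yi)) - g*((a*a+b*b) - (a*a-b*b)*h)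
      = a*a*((Xi*Xi+Yi*Yi-1)*(Yj*Yj) + (Xj*Xj+Yj*Yj-1)*(1-Xi*Xi))
      + b*b*((Xi*Xi+Yi*Yi-1)*(Xj*Xj) + (Xj*Xj+Yj*Yj-1)*(1-Yi*Yi))) by (unfold g, h; ring).
    rewrite Ui, Uj in E. lra. }
  pose proof (sum2_pos _ _ Hne) as Hp.
  assert (Hg: g <> 0) by lra.
  rewrite Hq, Hd in H.
  assert (H4: 4*g = k*((a*a+b*b) - (a*a-b*b)*h)).
  { apply (Rmult_eq_reg_l g); auto. lra. }
  unfold g, h in H4. lra.
Qed.

Lemma vclose (k m X1 Y1 X2 Y2 X3 Y3 : R) :
  X1*X1+Y1*Y1 = 1 -> X2*X2+Y2*Y2 = 1 -> X3*X3+Y3*Y3 = 1 ->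
  (X2-X3 <> 0 \/ Y2-Y3 <> 0) ->
  (1-k)*(X1*X2) + (1+k)*(Y1*Y2) = m ->
  (1-k)*(X1*X3) + (1+k)*(Y1*Y3) = m ->
  (1-k)*(X2*X3) + (1+k)*(Y2*Y3) = m ->
  (1 - k*k + 2*m) * (k*(X1*X1 - Y1*Y1) - 1 + m) = 0.
Proof.
  intros U1 U2 U3 Hne H12 H13 H23.
  set (dx := X2-X3) in *. set (dy := Y2-Y3) in *.
  set (sx := X2+X3). set (sy := Y2+Y3).
  set (vx := (1-k)*X1). set (vy := (1+k)*Y1).
  set (N := vx*vx+vy*vy).
  assert (Hvd: vx*dx+vy*dy = 0) by (unfold vx, vy, dx, dy; lra).
  assert (Hsd: sx*dx+sy*dy = 0) by (unfold sx, sy, dx, dy; lra).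
  assert (Hvs: vx*sx+vy*sy = 2*m) by (unfold vx, vy, sx, sy; lra).
  pose proof (sum2_pos _ _ Hne) as Hdp.
  assert (Hcr: sx*vy - sy*vx = 0).
  { assert (E: (sx*vy - sy*vx)*(dx*dx+dy*dy) = (sx*dx+sy*dy)*(dx*vy-dy*vx) + (vx*dx+vy*dy)*(sx*dy-sy*dx)) by ring.
    rewrite Hsd, Hvd in E.
    assert (E2: (sx*vy - sy*vx)*(dx*dx+dy*dy) = 0) by lra.
    apply Rmult_integral in E2. destruct E2; lra. }
  destruct (Req_dec N 0) as [HN|HN].
  - assert (vx = 0 /\ vy = 0) as [Vx Vy].
    { pose proof (sq_nonneg vx); pose proof (sq_nonneg vy).
      split; apply Rsqr_0_uniq; unfold Rsqr, N in *; lra. }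
    assert (Hm: m = vx*X2 + vy*Y2) by (unfold vx, vy; lra).
    rewrite Vx, Vy in Hm. replace (0*X2+0*Y2) with 0 in Hm by ring.
    destruct (Req_dec X1 0) as [Hx|Hx].
    + assert (Y1 <> 0) by (intro; subst; lra).
      assert (1 + k = 0). { unfold vy in Vy. apply Rmult_integral in Vy. destruct Vy; [auto| contradiction]. }
      replace k with (-1) by lra. rewrite Hm. ring.
    + assert (1 - k = 0). { unfold vx in Vx. apply Rmult_integral in Vx. destruct Vx; [auto| contradiction]. }
      replace k with 1 by lra. rewrite Hm. ring.
  - assert (Ssx: N*sx = 2*m*vx).
    { assert (E: N*sx = (vx*sx+vy*sy)*vx + (vy*sx-vx*sy)*vy) by (unfold N; ring).
      rewrite E, Hvs. replace (vy*sx-vx*sy) with (sx*vy-sy*vx) by ring. rewrite Hcr. ring. }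
    assert (Ssy: N*sy = 2*m*vy).
    { assert (E: N*sy = (vx*sx+vy*sy)*vy - (vy*sx-vx*sy)*vx) by (unfold N; ring).
      rewrite E, Hvs. replace (vy*sx-vx*sy) with (sx*vy-sy*vx) by ring. rewrite Hcr. ring. }
    set (Bdd := (1-k)*(dx*dx) + (1+k)*(dy*dy)).
    set (W := (1-k)*(X1*X1) + (1+k)*(Y1*Y1)).
    assert (Hdd: N*Bdd = (1-k)*(1+k)*W*(dx*dx+dy*dy)).
    { assert (E: N*Bdd - (1-k)*(1+k)*W*(dx*dx+dy*dy) = ((1-k)-(1+k))*((1-k)*X1*dx - (1+k)*Y1*dy)*(vx*dx+vy*dy))
        by (unfold N, Bdd, W, vx, vy; ring).
      rewrite Hvd in E. lra. }
    assert (Hf: 4*m = ((1-k)*(sx*sx) + (1+k)*(sy*sy)) - Bdd) by (unfold Bdd, sx, sy, dx, dy; lra).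
    assert (Hg: sx*sx+sy*sy+dx*dx+dy*dy = 4) by (unfold sx, sy, dx, dy; lra).
    assert (Hss: N*(sx*sx+sy*sy) = 4*m*m).
    { apply (Rmult_eq_reg_l N); auto.
      replace (N*(N*(sx*sx+sy*sy))) with ((N*sx)*(N*sx)+(N*sy)*(N*sy)) by ring.
      rewrite Ssx, Ssy. unfold N. ring. }
    assert (Hmain: 4*m*(N*N) = 4*m*m*((1-k)*(vx*vx)+(1+k)*(vy*vy)) - (1-k)*(1+k)*W*(4*N - 4*m*m)).
    { assert (E1: N*N*((1-k)*(sx*sx) + (1+k)*(sy*sy)) = 4*m*m*((1-k)*(vx*vx)+(1+k)*(vy*vy))).
      { replace (N*N*((1-k)*(sx*sx) + (1+k)*(sy*sy))) with ((1-k)*((N*sx)*(N*sx)) + (1+k)*((N*sy)*(N*sy))) by ring.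
        rewrite Ssx, Ssy. ring. }
      assert (E2: N*N*Bdd = (1-k)*(1+k)*W*(4*N - 4*m*m)).
      { replace (N*N*Bdd) with (N*(N*Bdd)) by ring. rewrite Hdd.
        replace (N*((1-k)*(1+k)*W*(dx*dx+dy*dy))) with ((1-k)*(1+k)*W*(N*(dx*dx+dy*dy))) by ring.
        f_equal. replace (dx*dx+dy*dy) with (4 - (sx*sx+sy*sy)) by lra.
        rewrite Rmult_minus_distr_l, Hss. ring. }
      pose proof (f_equal (Rmult (N*N)) Hf) as E3. rewrite Rmult_minus_distr_l, E1, E2 in E3. lra. }
    assert (Hid: (1-k)*(vx*vx)+(1+k)*(vy*vy) + (1-k)*(1+k)*W = 2*N) by (unfold N, W, vx, vy; ring).
    assert (Hz: N*(m*N - 2*m*m + (1-k)*(1+k)*W) = 0).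
    { assert (E: 4*(N*(m*N - 2*m*m + (1-k)*(1+k)*W)) =
        (4*m*(N*N) - (4*m*m*((1-k)*(vx*vx)+(1+k)*(vy*vy)) - (1-k)*(1+k)*W*(4*N - 4*m*m)))
         + 4*m*m*((1-k)*(vx*vx)+(1+k)*(vy*vy) + (1-k)*(1+k)*W - 2*N)) by ring.
      rewrite Hmain, Hid in E. lra. }
    apply Rmult_integral in Hz. destruct Hz as [Hz|Hz]; [contradiction|].
    assert (WN: W = 1 - k*(X1*X1-Y1*Y1)) by (unfold W; lra).
    assert (NN: N = 1 + k*k - 2*k*(X1*X1-Y1*Y1)).
    { unfold N, vx, vy. assert (Y1*Y1 = 1 - X1*X1) by lra.
      replace (((1 - k) * X1 * ((1 - k) * X1) + (1 + k) * Y1 * ((1 + k) * Y1))) with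
        ((1-k)*(1-k)*(X1*X1) + (1+k)*(1+k)*(Y1*Y1)) by ring.
      rewrite H. ring. }
    rewrite WN, NN in Hz.
    assert (E: (1 - k*k + 2*m) * (k*(X1*X1 - Y1*Y1) - 1 + m) = -(m * (1 + k * k - 2 * k * (X1 * X1 - Y1 * Y1)) - 2 * m * m + (1 - k) * (1 + k) * (1 - k * (X1 * X1 - Y1 * Y1)))) by ring.
    rewrite E, Hz. ring.
Qed.

Lemma pair_rel2 (a b u Xi Yi Xj Yj : R) : 0 < a -> 0 < b ->
  Xi*Xi+Yi*Yi = 1 -> Xj*Xj+Yj*Yj = 1 -> (Xj-Xi <> 0 \/ Yj-Yi <> 0) ->
  (a*Xi/(a*a)*(a*Xj-a*Xi) + b*Yi/(b*b)*(b*Yj-b*Yi))*(a*Xi/(a*a)*(a*Xj-a*Xi) + b*Yi/(b*b)*(b*Yj-b*Yi))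
    = u*((a*Xj-a*Xi)*(a*Xj-a*Xi)+(b*Yj-b*Yi)*(b*Yj-b*Yi)) ->
  (1 - u*(a*a-b*b))*(Xi*Xj) + (1 + u*(a*a-b*b))*(Yi*Yj) = 1 - u*(a*a+b*b).
Proof.
  intros Ha Hb Ui Uj Hne H.
  assert (Et: a*Xi/(a*a)*(a*Xj-a*Xi) + b*Yi/(b*b)*(b*Yj-b*Yi) = -(((Xj-Xi)*(Xj-Xi)+(Yj-Yi)*(Yj-Yi))/2)).
  { transitivity (Xi*(Xj-Xi) + Yi*(Yj-Yi)); [field; lra | lra]. }
  rewrite Et in H.
  pose proof (pair_rel a b (4*u) Xi Yi Xj Yj Ui Uj Hne) as P.
  replace (4*u/4) with u in P by field. apply P.
  replace (((Xj - Xi) * (Xj - Xi) + (Yj - Yi) * (Yj - Yi)) * ((Xj - Xi) * (Xj - Xi) + (Yj - Yi) * (Yj - Yi)))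
    with (4 * (-(((Xj-Xi)*(Xj-Xi)+(Yj-Yi)*(Yj-Yi))/2) * -(((Xj-Xi)*(Xj-Xi)+(Yj-Yi)*(Yj-Yi))/2))) by field.
  rewrite H. ring.
Qed.

Lemma neq_scale (a x y : R) : a <> 0 -> a*x - a*y <> 0 -> x - y <> 0.
Proof. intros Ha H E. apply H. replace (a*x-a*y) with (a*(x-y)) by ring. rewrite E. ring. Qed.

Lemma closure (a b u x1 y1 x2 y2 x3 y3 : R) : 0 < b -> b < a -> 0 < u ->
  x1*x1/(a*a) + y1*y1/(b*b) = 1 -> x2*x2/(a*a) + y2*y2/(b*b) = 1 -> x3*x3/(a*a) + y3*y3/(b*b) = 1 ->
  (x2-x1 <> 0 \/ y2-y1 <> 0) -> (x3-x1 <> 0 \/ y3-y1 <> 0) -> (x3-x2 <> 0 \/ y3-y2 <> 0) ->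
  (x1/(a*a)*(x2-x1) + y1/(b*b)*(y2-y1))*(x1/(a*a)*(x2-x1) + y1/(b*b)*(y2-y1)) = u*((x2-x1)*(x2-x1)+(y2-y1)*(y2-y1)) ->
  (x1/(a*a)*(x3-x1) + y1/(b*b)*(y3-y1))*(x1/(a*a)*(x3-x1) + y1/(b*b)*(y3-y1)) = u*((x3-x1)*(x3-x1)+(y3-y1)*(y3-y1)) ->
  (x2/(a*a)*(x3-x2) + y2/(b*b)*(y3-y2))*(x2/(a*a)*(x3-x2) + y2/(b*b)*(y3-y2)) = u*((x3-x2)*(x3-x2)+(y3-y2)*(y3-y2)) ->
  (a*a-b*b)*(a*a-b*b)*(u*u) + 2*(a*a+b*b)*u - 3 = 0.
Proof.
  intros Hb Hab Hu E1 E2 E3 N12 N13 N23 T12 T13 T23.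
  assert (Ha: 0 < a) by lra.
  set (X1 := x1/a) in *. assert (Ex1: x1 = a*X1) by (unfold X1; field; lra). clearbody X1. subst x1.
  set (X2 := x2/a) in *. assert (Ex2: x2 = a*X2) by (unfold X2; field; lra). clearbody X2. subst x2.
  set (X3 := x3/a) in *. assert (Ex3: x3 = a*X3) by (unfold X3; field; lra). clearbody X3. subst x3.
  set (Y1 := y1/b) in *. assert (Ey1: y1 = b*Y1) by (unfold Y1; field; lra). clearbody Y1. subst y1.
  set (Y2 := y2/b) in *. assert (Ey2: y2 = b*Y2) by (unfold Y2; field; lra). clearbody Y2. subst y2.
  set (Y3 := y3/b) in *. assert (Ey3: y3 = b*Y3) by (unfold Y3; field; lra). clearbody Y3. subst y3.
  assert (U1: X1*X1+Y1*Y1 = 1) by (rewrite <- E1; field; lra).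
  assert (U2: X2*X2+Y2*Y2 = 1) by (rewrite <- E2; field; lra).
  assert (U3: X3*X3+Y3*Y3 = 1) by (rewrite <- E3; field; lra).
  assert (M12: X2-X1 <> 0 \/ Y2-Y1 <> 0) by (destruct N12; [left; apply (neq_scale a) | right; apply (neq_scale b)]; auto; lra).
  assert (M13: X3-X1 <> 0 \/ Y3-Y1 <> 0) by (destruct N13; [left; apply (neq_scale a) | right; apply (neq_scale b)]; auto; lra).
  assert (M23: X3-X2 <> 0 \/ Y3-Y2 <> 0) by (destruct N23; [left; apply (neq_scale a) | right; apply (neq_scale b)]; auto; lra).
  pose proof (pair_rel2 a b u X1 Y1 X2 Y2 Ha Hb U1 U2 M12 T12) as P12.
  pose proof (pair_rel2 a b u X1 Y1 X3 Y3 Ha Hb U1 U3 M13 T13) as P13.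
  pose proof (pair_rel2 a b u X2 Y2 X3 Y3 Ha Hb U2 U3 M23 T23) as P23.
  assert (M23': X2-X3 <> 0 \/ Y2-Y3 <> 0) by (destruct M23; [left|right]; lra).
  pose proof (vclose (u*(a*a-b*b)) (1 - u*(a*a+b*b)) X1 Y1 X2 Y2 X3 Y3 U1 U2 U3 M23' P12 P13 P23) as V.
  apply Rmult_integral in V. destruct V as [V|V].
  - replace ((a*a-b*b)*(a*a-b*b)*(u*u) + 2*(a*a+b*b)*u - 3) with (-(1 - u * (a * a - b * b) * (u * (a * a - b * b)) + 2 * (1 - u * (a * a + b * b)))) by ring.
    rewrite V. ring.
  - exfalso.
    assert (C1: X1*X1 - Y1*Y1 <= 1) by (pose proof (sq_nonneg Y1); lra).
    assert (D0: 0 <= a*a-b*b) by (assert (b*b <= a*a) by (apply Rmult_le_compat; lra); lra).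
    assert (Bp: 0 < b*b) by (apply Rmult_lt_0_compat; lra).
    assert ((a*a-b*b)*(X1*X1-Y1*Y1) <= (a*a-b*b)*1) by (apply Rmult_le_compat_l; lra).
    assert (Z: (a*a-b*b)*(X1*X1-Y1*Y1) - (a*a+b*b) < 0) by lra.
    assert (Z2: u*((a*a-b*b)*(X1*X1-Y1*Y1) - (a*a+b*b)) = 0).
    { rewrite <- V. ring. }
    set (z := (a*a-b*b)*(X1*X1-Y1*Y1) - (a*a+b*b)) in *. clearbody z.
    assert (u*z < 0) by (apply Rmult_pos_neg; lra). lra.
Qed.

Definition nz (n : pt) : Prop := fst n <> 0 \/ snd n <> 0.

Lemma perp2_cross (m u v : pt) : nz m -> dot m u = 0 -> dot m v = 0 -> cross u v = 0.
Proof.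
  destruct m as [mx my], u as [ux uy], v as [vx vy]; unfold nz, dot, cross; cbn [fst snd].
  intros Hm H1 H2.
  assert (E1: mx*(ux*vy - uy*vx) = vy*(mx*ux+my*uy) - uy*(mx*vx+my*vy)) by ring.
  assert (E2: my*(ux*vy - uy*vx) = ux*(mx*vx+my*vy) - vx*(mx*ux+my*uy)) by ring.
  rewrite H1, H2 in E1, E2.
  destruct Hm as [Hm|Hm].
  - assert (mx*(ux*vy-uy*vx) = 0) by lra. apply Rmult_integral in H. destruct H; [contradiction|auto].
  - assert (my*(ux*vy-uy*vx) = 0) by lra. apply Rmult_integral in H. destruct H; [contradiction|auto].
Qed.

Lemma collinear3 (n X Y Z : pt) : nz n -> dot n X = 1 -> dot n Y = 1 -> dot n Z = 1 ->
  cross (psub X Y) (psub Z Y) = 0.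
Proof.
  intros Hn HX HY HZ. apply (perp2_cross n); auto;
  destruct n, X, Y, Z; unfold dot, psub in *; cbn [fst snd] in *; lra.
Qed.

Lemma perp_from_par (n z d : pt) : nz n -> cross n z = 0 -> dot n d = 0 -> dot z d = 0.
Proof.
  destruct n as [nx ny], z as [zx zy], d as [dx dy]; unfold nz, dot, cross; cbn [fst snd].
  intros Hn H1 H2.
  assert (E: (zx*dx+zy*dy)*(nx*nx+ny*ny) = (nx*zx+ny*zy)*(nx*dx+ny*dy) + (nx*zy-ny*zx)*(nx*dy-ny*dx)) by ring.
  rewrite H1, H2 in E. pose proof (sum2_pos _ _ Hn).
  assert ((zx*dx+zy*dy)*(nx*nx+ny*ny) = 0) by lra.
  apply Rmult_integral in H0. destruct H0; lra.
Qed.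

Lemma par_perp_zero (n z : pt) : nz n -> cross n z = 0 -> dot n z = 0 -> fst z = 0 /\ snd z = 0.
Proof.
  destruct n as [nx ny], z as [zx zy]; unfold nz, dot, cross; cbn [fst snd].
  intros Hn H1 H2.
  assert (E1: zx*(nx*nx+ny*ny) = nx*(nx*zx+ny*zy) - ny*(nx*zy-ny*zx)) by ring.
  assert (E2: zy*(nx*nx+ny*ny) = ny*(nx*zx+ny*zy) + nx*(nx*zy-ny*zx)) by ring.
  rewrite H1, H2 in E1, E2. pose proof (sum2_pos _ _ Hn).
  split.
  - assert (zx*(nx*nx+ny*ny) = 0) by lra. apply Rmult_integral in H0. destruct H0; lra.
  - assert (zy*(nx*nx+ny*ny) = 0) by lra. apply Rmult_integral in H0. destruct H0; lra.
Qed.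

Lemma exc_eq_P (n E P : pt) : nz n -> dot n E = 1 -> dot n P = 1 -> cross n (psub E P) = 0 -> E = P.
Proof.
  intros Hn H1 H2 H3.
  assert (dot n (psub E P) = 0) by (destruct n, E, P; unfold dot, psub in *; cbn [fst snd] in *; lra).
  destruct (par_perp_zero _ _ Hn H3 H) as [A B].
  destruct E, P; unfold psub in *; cbn [fst snd] in *. f_equal; lra.
Qed.

Lemma line_par_eq (n X Y : pt) : dot n X = 1 -> dot n Y = 1 -> cross X Y = 0 -> X = Y.
Proof.
  destruct n as [nx ny], X as [xx xy], Y as [yx yy]; unfold dot, cross; cbn [fst snd].
  intros H1 H2 H3.
  assert (Hx: xx <> 0 \/ xy <> 0) by (destruct (Req_dec xx 0); destruct (Req_dec xy 0); subst; auto; lra).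
  pose proof (sum2_pos _ _ Hx) as Hp.
  (* |X|^2 Y = <X,Y> X *)
  assert (E1: (xx*xx+xy*xy)*yx = (xx*yx+xy*yy)*xx - xy*(xx*yy-xy*yx)) by ring.
  assert (E2: (xx*xx+xy*xy)*yy = (xx*yx+xy*yy)*xy + xx*(xx*yy-xy*yx)) by ring.
  rewrite H3 in E1, E2.
  assert (E3: (xx*xx+xy*xy) * (nx*yx+ny*yy) = (xx*yx+xy*yy)*(nx*xx+ny*xy)).
  { replace ((xx*xx+xy*xy) * (nx*yx+ny*yy)) with (nx*((xx*xx+xy*xy)*yx) + ny*((xx*xx+xy*xy)*yy)) by ring.
    rewrite E1, E2. ring. }
  rewrite H1, H2 in E3.
  assert (E4: xx*yx+xy*yy = xx*xx+xy*xy) by lra.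
  assert (yx = xx).
  { apply (Rmult_eq_reg_l (xx*xx+xy*xy)); [|lra]. rewrite E1, E4. ring. }
  assert (yy = xy).
  { apply (Rmult_eq_reg_l (xx*xx+xy*xy)); [|lra]. rewrite E2, E4. ring. }
  subst; auto.
Qed.

Lemma foot_eq (A B C P : pt) : B <> C -> cross (psub P B) (psub C B) = 0 ->
  dot (psub A P) (psub C B) = 0 -> foot A B C = P.
Proof.
  intros Hne H1 H2.
  assert (Hd: nz (psub C B)) by (unfold nz; pose proof (pt_neq _ _ (not_eq_sym Hne)); unfold psub; cbn [fst snd]; auto).
  destruct A as [ax ay], B as [bx by_], C as [cx cy], P as [px py].
  unfold nz, foot, padd, pscale, dot, cross, psub in *; cbn [fst snd] in *.
  pose proof (sum2_pos _ _ Hd) as Hp.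
  set (dx := cx - bx) in *. set (dy := cy - by_) in *.
  assert (Ht: (ax-bx)*dx + (ay-by_)*dy = (px-bx)*dx+(py-by_)*dy) by lra.
  rewrite Ht.
  f_equal.
  - apply (Rmult_eq_reg_l (dx*dx+dy*dy)); [|lra]. field_simplify; [|lra].
    assert (E: (dx*dx+dy*dy)*(px-bx) - ((px-bx)*dx+(py-by_)*dy)*dx = dy*((px-bx)*dy - (py-by_)*dx)) by ring.
    rewrite H1 in E. nra.
  - apply (Rmult_eq_reg_l (dx*dx+dy*dy)); [|lra]. field_simplify; [|lra].
    assert (E: (dx*dx+dy*dy)*(py-by_) - ((px-bx)*dx+(py-by_)*dy)*dy = -dx*((px-bx)*dy - (py-by_)*dx)) by ring.
    rewrite H1 in E. nra.
Qed.

Lemma sym_core (e2x e2y e3x e3y z2x z2y z3x z3y L1 : R) :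
  (e2x <> 0 \/ e2y <> 0) -> (e3x <> 0 \/ e3y <> 0) -> 0 <= L1 ->
  z2x*e3y - z2y*e3x = 0 -> (e2x - z2x)*e3x + (e2y - z2y)*e3y = 0 ->
  z3x*e2y - z3y*e2x = 0 -> (e3x - z3x)*e2x + (e3y - z3y)*e2y = 0 ->
  ((e3x*e3x+e3y*e3y)*e2x + (e2x*e2x+e2y*e2y)*e3x)/(L1 + (e3x*e3x+e3y*e3y) + (e2x*e2x+e2y*e2y)) * (z2y+z3y)
  - ((e3x*e3x+e3y*e3y)*e2y + (e2x*e2x+e2y*e2y)*e3y)/(L1 + (e3x*e3x+e3y*e3y) + (e2x*e2x+e2y*e2y)) * (z2x+z3x) = 0.
Proof.
  intros H2 H3 HL C2 D2 C3 D3.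
  pose proof (sum2_pos _ _ H2) as P2. pose proof (sum2_pos _ _ H3) as P3.
  set (L2 := e3x*e3x+e3y*e3y) in *. set (L3 := e2x*e2x+e2y*e2y) in *.
  set (g := e2x*e3x+e2y*e3y).
  assert (A2x: L2*z2x = g*e3x).
  { assert (E: L2*z2x = (z2x*e3x+z2y*e3y)*e3x + e3y*(z2x*e3y - z2y*e3x)) by (unfold L2; ring).
    rewrite C2 in E. assert (Gz: z2x*e3x+z2y*e3y = g) by (unfold g; lra). rewrite Gz in E. lra. }
  assert (A2y: L2*z2y = g*e3y).
  { assert (E: L2*z2y = (z2x*e3x+z2y*e3y)*e3y - e3x*(z2x*e3y - z2y*e3x)) by (unfold L2; ring).
    rewrite C2 in E. assert (Gz: z2x*e3x+z2y*e3y = g) by (unfold g; lra). rewrite Gz in E. lra. }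
  assert (A3x: L3*z3x = g*e2x).
  { assert (E: L3*z3x = (z3x*e2x+z3y*e2y)*e2x + e2y*(z3x*e2y - z3y*e2x)) by (unfold L3; ring).
    rewrite C3 in E. assert (Gz: z3x*e2x+z3y*e2y = g) by (unfold g; lra). rewrite Gz in E. lra. }
  assert (A3y: L3*z3y = g*e2y).
  { assert (E: L3*z3y = (z3x*e2x+z3y*e2y)*e2y - e2x*(z3x*e2y - z3y*e2x)) by (unfold L3; ring).
    rewrite C3 in E. assert (Gz: z3x*e2x+z3y*e2y = g) by (unfold g; lra). rewrite Gz in E. lra. }
  assert (G: (L2*e2x + L3*e3x)*(z2y+z3y) - (L2*e2y+L3*e3y)*(z2x+z3x) = 0).
  { apply (Rmult_eq_reg_l (L2*L3)); [|apply Rgt_not_eq; apply Rmult_lt_0_compat; auto].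
    replace (L2*L3*((L2*e2x + L3*e3x)*(z2y+z3y) - (L2*e2y+L3*e3y)*(z2x+z3x))) with
      ((L2*e2x + L3*e3x)*(L3*(L2*z2y)+L2*(L3*z3y)) - (L2*e2y+L3*e3y)*(L3*(L2*z2x)+L2*(L3*z3x))) by ring.
    rewrite A2x, A2y, A3x, A3y. ring. }
  assert (S: L1 + L2 + L3 <> 0) by lra.
  replace ((L2*e2x + L3*e3x)/(L1+L2+L3)*(z2y+z3y) - (L2*e2y+L3*e3y)/(L1+L2+L3)*(z2x+z3x))
    with (((L2*e2x + L3*e3x)*(z2y+z3y) - (L2*e2y+L3*e3y)*(z2x+z3x))/(L1+L2+L3)) by (field; auto).
  rewrite G. unfold Rdiv. ring.
Qed.

Lemma sym_par (E1 E2 E3 P2 P3 : pt) : E2 <> E1 -> E3 <> E1 ->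
  cross (psub P2 E1) (psub E3 E1) = 0 -> dot (psub E2 P2) (psub E3 E1) = 0 ->
  cross (psub P3 E1) (psub E2 E1) = 0 -> dot (psub E3 P3) (psub E2 E1) = 0 ->
  cross (psub (symmedian E1 E2 E3) E1) (psub (padd P2 P3) (pscale 2 E1)) = 0.
Proof.
  intros N2 N3 C2 D2 C3 D3.
  pose proof (pt_neq _ _ N2) as M2. pose proof (pt_neq _ _ N3) as M3.
  destruct E1 as [x1 y1], E2 as [x2 y2], E3 as [x3 y3], P2 as [p2x p2y], P3 as [p3x p3y].
  unfold symmedian, cross, dot, psub, padd, pscale in *; cbn [fst snd] in *.
  set (L1 := (x2 - x3) * (x2 - x3) + (y2 - y3) * (y2 - y3)).
  assert (HL: 0 <= L1) by (unfold L1; pose proof (sq_nonneg (x2-x3)); pose proof (sq_nonneg (y2-y3)); lra).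
  pose proof (sym_core (x2-x1) (y2-y1) (x3-x1) (y3-y1) (p2x-x1) (p2y-y1) (p3x-x1) (p3y-y1) L1 M2 M3 HL) as S.
  pose proof (sum2_pos _ _ M2) as Q2. pose proof (sum2_pos _ _ M3) as Q3.
  assert (Hs: L1 + ((x3 - x1) * (x3 - x1) + (y3 - y1) * (y3 - y1)) + ((x1 - x2) * (x1 - x2) + (y1 - y2) * (y1 - y2)) <> 0).
  { replace ((x1 - x2) * (x1 - x2) + (y1 - y2) * (y1 - y2)) with ((x2 - x1) * (x2 - x1) + (y2 - y1) * (y2 - y1)) by ring. lra. }
  rewrite <- S; [| lra | lra | lra | lra].
  replace ((x2 - x1) * (x2 - x1) + (y2 - y1) * (y2 - y1)) with ((x1 - x2) * (x1 - x2) + (y1 - y2) * (y1 - y2)) by ring.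
  field. auto.
Qed.

Lemma sym_rot (A B C : pt) : symmedian B C A = symmedian A B C.
Proof.
  unfold symmedian.
  set (la := dot (psub B C) (psub B C)). set (lb := dot (psub C A) (psub C A)). set (lc := dot (psub A B) (psub A B)).
  replace (lb + lc + la) with (la + lb + lc) by ring.
  destruct A, B, C; unfold pscale, padd; cbn [fst snd]. f_equal; ring.
Qed.

Lemma meets_lemma (n V S HU HW : pt) (R : R) : 0 < R -> dot n V = 1 -> dot n S = 1 -> V <> S ->
  nz (psub HW HU) -> dot (psub HW HU) (psub HW HU) = R * (dot n (psub HW HU) * dot n (psub HW HU)) ->
  meets_on_circle (0,0) (sqrt R) (0,0) HU HW V S.
Proof.
  intros HR HV HS Hne Hw Hrel.
  unfold meets_on_circle, on_line.
  set (w := psub HW HU) in *. clearbody w.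
  set (t := dot n w) in *.
  assert (Hwp: 0 < dot w w) by (destruct w; unfold nz, dot in *; cbn [fst snd] in *; apply sum2_pos; auto).
  assert (Ht: t <> 0) by (intro E; rewrite E in Hrel; lra).
  assert (Hn: nz n) by (unfold nz; destruct n as [nx ny]; cbn [fst snd];
     destruct (Req_dec nx 0); destruct (Req_dec ny 0); auto; exfalso; apply Ht; unfold t, dot; cbn [fst snd]; subst; ring).
  split.
  - exists (pscale (/t) w). split.
    + destruct w; unfold cross, psub, pscale; cbn [fst snd]. ring.
    + apply (collinear3 n); auto.
      unfold t in *. destruct w, n; unfold dot, pscale in *; cbn [fst snd] in *. field. auto.
  - intros X H1 H2.
    assert (HX: dot n X = 1).
    { assert (Hsv: nz (psub S V)) by (unfold nz; pose proof (pt_neq _ _ (not_eq_sym Hne)); unfold psub; cbn [fst snd]; auto).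
      assert (C: cross (psub S V) (psub X V) = 0) by (destruct S, V, X; unfold cross, psub in *; cbn [fst snd] in *; lra).
      assert (D: dot (psub S V) n = 0) by (destruct S, V, n; unfold dot, psub in *; cbn [fst snd] in *; lra).
      pose proof (perp_from_par _ _ _ Hsv C D) as P.
      destruct X, V, n; unfold dot, psub in *; cbn [fst snd] in *; lra. }
    unfold t in *. clear t.
    destruct X as [xx xy], w as [wx wy], n as [nx ny].
    unfold dist, norm, cross, dot, psub in *; cbn [fst snd] in *.
    replace (xx - 0) with xx in * by ring. replace (xy - 0) with xy in * by ring.
    set (W := wx*wx+wy*wy) in *. set (T := nx*wx+ny*wy) in *. set (G := xx*wx+xy*wy).
    assert (A1: W*xx = G*wx) by (assert (E: W*xx = G*wx + wy*(xx*wy - xy*wx)) by (unfold W, G; ring); rewrite H1 in E; lra).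
    assert (A2: W*xy = G*wy) by (assert (E: W*xy = G*wy - wx*(xx*wy - xy*wx)) by (unfold W, G; ring); rewrite H1 in E; lra).
    assert (A3: W = G*T).
    { replace W with (W*(nx*xx+ny*xy)) by (rewrite HX; ring).
      replace (W*(nx*xx+ny*xy)) with (nx*(W*xx)+ny*(W*xy)) by ring. rewrite A1, A2. unfold T. ring. }
    assert (A4: (xx*xx+xy*xy)*W = G*G) by (assert (E: (xx*xx+xy*xy)*W = G*G + (xx*wy-xy*wx)*(xx*wy-xy*wx)) by (unfold W, G; ring); rewrite H1 in E; lra).
    assert (A5: G = R*T).
    { apply (Rmult_eq_reg_r T); auto. rewrite <- A3. rewrite Hrel. ring. }
    assert (A6: xx*xx+xy*xy = R).
    { apply (Rmult_eq_reg_r W); [|lra]. rewrite A4, A5. rewrite Hrel. ring. }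
    rewrite A6. reflexivity.
Qed.


Lemma ia_pos (a : R) (Ha : 0 < a) : 0 < / a^2.
Proof. apply Rinv_0_lt_compat. apply pow_lt. auto. Qed.
Lemma ib_pos (b : R) (Hb : 0 < b) : 0 < / b^2.
Proof. apply Rinv_0_lt_compat. apply pow_lt. auto. Qed.

Lemma ell_self (a b : R) (Ha : 0 < a) (Hb : 0 < b) P : on_ellipse a b P -> dot (ellipse_normal a b P) P = 1.
Proof. destruct P; unfold on_ellipse, dot, ellipse_normal; cbn [fst snd]; intros H; rewrite <- H; field; lra. Qed.

Lemma ell_nz (a b : R) (Ha : 0 < a) (Hb : 0 < b) P : on_ellipse a b P -> nz (ellipse_normal a b P).
Proof.
  destruct P as [x y]; unfold on_ellipse, nz, ellipse_normal; cbn [fst snd]; intros H.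
  destruct (Req_dec x 0); destruct (Req_dec y 0); subst.
  - exfalso. unfold Rdiv in H. rewrite !pow_i in H by lia. lra.
  - right. unfold Rdiv. intro E. apply Rmult_integral in E. destruct E; [contradiction|]. pose proof (ib_pos b Hb). lra.
  - left. unfold Rdiv. intro E. apply Rmult_integral in E. destruct E; [contradiction|]. pose proof (ia_pos a Ha). lra.
  - left. unfold Rdiv. intro E. apply Rmult_integral in E. destruct E; [contradiction|]. pose proof (ia_pos a Ha). lra.
Qed.

Lemma ell_eq (a b : R) (Ha : 0 < a) (Hb : 0 < b) P Q : on_ellipse a b P -> on_ellipse a b Q -> dot (ellipse_normal a b P) Q = 1 -> P = Q.
Proof.
  destruct P as [px py], Q as [qx qy]; unfold on_ellipse, dot, ellipse_normal; cbn [fst snd]; intros H1 H2 H3.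
  pose proof (ia_pos a Ha). pose proof (ib_pos b Hb).
  unfold Rdiv in *. set (ia := / a^2) in *. set (ib := / b^2) in *. clearbody ia ib.
  assert (E: (px-qx)*(px-qx)*ia + (py-qy)*(py-qy)*ib = 0).
  { replace ((px-qx)*(px-qx)*ia + (py-qy)*(py-qy)*ib) with
      ((px^2*ia + py^2*ib) + (qx^2*ia+qy^2*ib) - 2*(px*ia*qx + py*ib*qy)) by ring. rewrite H1, H2, H3. ring. }
  pose proof (sq_nonneg (px-qx)). pose proof (sq_nonneg (py-qy)).
  assert (A: (px-qx)*(px-qx)*ia = 0) by (pose proof (Rmult_le_pos _ _ H4 (Rlt_le _ _ H)); pose proof (Rmult_le_pos _ _ H5 (Rlt_le _ _ H0)); lra).
  assert (B: (py-qy)*(py-qy)*ib = 0) by lra.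
  apply Rmult_integral in A. apply Rmult_integral in B.
  destruct A as [A|A]; [|lra]. destruct B as [B|B]; [|lra].
  apply Rmult_integral in A. apply Rmult_integral in B.
  f_equal; destruct A; destruct B; lra.
Qed.

Lemma normal_sym (a b : R) (Ha : 0 < a) (Hb : 0 < b) P Q : dot (ellipse_normal a b P) Q = dot (ellipse_normal a b Q) P.
Proof. destruct P, Q; unfold dot, ellipse_normal; cbn [fst snd]; field; lra. Qed.

Lemma normals_neq (a b : R) (Ha : 0 < a) (Hb : 0 < b) P Q : P <> Q -> nz (psub (ellipse_normal a b P) (ellipse_normal a b Q)).
Proof.
  intros Hne. destruct P as [px py], Q as [qx qy]; unfold nz, psub, ellipse_normal; cbn [fst snd].
  destruct (Req_dec (px/a^2 - qx/a^2) 0) as [E1|E1]; destruct (Req_dec (py/b^2 - qy/b^2) 0) as [E2|E2]; auto.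
  exfalso. apply Hne.
  pose proof (ia_pos a Ha). pose proof (ib_pos b Hb).
  assert (px = qx). { apply (Rmult_eq_reg_r (/a^2)); [|lra]. unfold Rdiv in E1. lra. }
  assert (py = qy). { apply (Rmult_eq_reg_r (/b^2)); [|lra]. unfold Rdiv in E2. lra. }
  subst; auto.
Qed.


Lemma dot_sub1 (n X Y : pt) : dot n X = 1 -> dot n Y = 1 -> dot n (psub X Y) = 0.
Proof. destruct n, X, Y; unfold dot, psub; cbn [fst snd]; lra. Qed.

Lemma par_trans (v u w : pt) : nz w -> cross v w = 0 -> cross u w = 0 -> cross v u = 0.
Proof.
  intros Hw H1 H2. apply (perp2_cross (snd w, - fst w)).
  - unfold nz in *; cbn [fst snd]. destruct Hw; [right; lra | left; auto].
  - destruct v, w; unfold cross, dot in *; cbn [fst snd] in *; lra.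
  - destruct u, w; unfold cross, dot in *; cbn [fst snd] in *; lra.
Qed.

Lemma zero_of_two (K U V : pt) : cross K U = 0 -> cross K V = 0 -> cross U V <> 0 -> K = (0,0).
Proof.
  destruct K as [kx ky], U as [ux uy], V as [vx vy]; unfold cross; cbn [fst snd]; intros H1 H2 H3.
  assert (E1: kx*(ux*vy-uy*vx) = ux*(kx*vy-ky*vx) - vx*(kx*uy-ky*ux)) by ring.
  assert (E2: ky*(ux*vy-uy*vx) = uy*(kx*vy-ky*vx) - vy*(kx*uy-ky*ux)) by ring.
  rewrite H1, H2 in E1, E2.
  assert (kx*(ux*vy-uy*vx) = 0) by lra. assert (ky*(ux*vy-uy*vx) = 0) by lra.
  apply Rmult_integral in H. apply Rmult_integral in H0.
  destruct H; [|contradiction]. destruct H0; [|contradiction]. subst; auto.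
Qed.

Lemma config a b (P1 P2 P3 E1 E2 E3 : pt) (R : R) : 0 < a -> 0 < b -> 0 < R ->
  on_ellipse a b P1 -> on_ellipse a b P2 -> on_ellipse a b P3 ->
  P1 <> P2 -> P2 <> P3 -> P3 <> P1 ->
  dot (ellipse_normal a b P2) E1 = 1 -> dot (ellipse_normal a b P3) E1 = 1 -> cross (ellipse_normal a b P1) (psub E1 P1) = 0 ->
  dot (ellipse_normal a b P3) E2 = 1 -> dot (ellipse_normal a b P1) E2 = 1 -> cross (ellipse_normal a b P2) (psub E2 P2) = 0 ->
  dot (ellipse_normal a b P1) E3 = 1 -> dot (ellipse_normal a b P2) E3 = 1 -> cross (ellipse_normal a b P3) (psub E3 P3) = 0 ->
  dot (psub P3 P2) (psub P3 P2) = R * (dot (ellipse_normal a b P3) (psub P3 P2) * dot (ellipse_normal a b P3) (psub P3 P2)) ->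
  dot (psub P3 P2) (psub P3 P2) = R * (dot (ellipse_normal a b P2) (psub P3 P2) * dot (ellipse_normal a b P2) (psub P3 P2)) ->
  dot (psub P1 P3) (psub P1 P3) = R * (dot (ellipse_normal a b P1) (psub P1 P3) * dot (ellipse_normal a b P1) (psub P1 P3)) ->
  dot (psub P1 P3) (psub P1 P3) = R * (dot (ellipse_normal a b P3) (psub P1 P3) * dot (ellipse_normal a b P3) (psub P1 P3)) ->
  dot (psub P2 P1) (psub P2 P1) = R * (dot (ellipse_normal a b P2) (psub P2 P1) * dot (ellipse_normal a b P2) (psub P2 P1)) ->
  dot (psub P2 P1) (psub P2 P1) = R * (dot (ellipse_normal a b P1) (psub P2 P1) * dot (ellipse_normal a b P1) (psub P2 P1)) ->
  is_cosine_circle E1 E2 E3 (0,0) (sqrt R).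
Proof.
  intros Ha Hb HR O1 O2 O3 N12 N23 N31 T21 T31 C1 T32 T12 C2 T13 T23 C3 S1 S2 S3 S4 S5 S6.
  set (n1 := ellipse_normal a b P1) in *. set (n2 := ellipse_normal a b P2) in *. set (n3 := ellipse_normal a b P3) in *.
  assert (Z1: nz n1) by (apply ell_nz; auto). assert (Z2: nz n2) by (apply ell_nz; auto). assert (Z3: nz n3) by (apply ell_nz; auto).
  assert (D1: dot n1 P1 = 1) by (apply ell_self; auto).
  assert (D2: dot n2 P2 = 1) by (apply ell_self; auto).
  assert (D3: dot n3 P3 = 1) by (apply ell_self; auto).
  assert (NE12: E1 <> E2).
  { intro Heq. assert (E1 = P1) by (apply (exc_eq_P n1); auto; rewrite Heq; auto).
    apply N12. symmetry. apply (ell_eq a b Ha Hb); auto. fold n2. rewrite <- H. auto. }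
  assert (NE23: E2 <> E3).
  { intro Heq. assert (E2 = P2) by (apply (exc_eq_P n2); auto; rewrite Heq; auto).
    apply N23. symmetry. apply (ell_eq a b Ha Hb); auto. fold n3. rewrite <- H. auto. }
  assert (NE31: E3 <> E1).
  { intro Heq. assert (E3 = P3) by (apply (exc_eq_P n3); auto; rewrite Heq; auto).
    apply N31. symmetry. apply (ell_eq a b Ha Hb); auto. fold n1. rewrite <- H. auto. }
  assert (F1: foot E1 E2 E3 = P1).
  { apply foot_eq; auto. apply (collinear3 n1); auto.
    apply (perp_from_par n1); auto. apply dot_sub1; auto. }
  assert (F2: foot E2 E3 E1 = P2).
  { apply foot_eq; auto. apply (collinear3 n2); auto.
    apply (perp_from_par n2); auto. apply dot_sub1; auto. }
  assert (F3: foot E3 E1 E2 = P3).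
  { apply foot_eq; auto. apply (collinear3 n3); auto.
    apply (perp_from_par n3); auto. apply dot_sub1; auto. }
  assert (SP1: cross (psub (symmedian E1 E2 E3) E1) (psub (padd P2 P3) (pscale 2 E1)) = 0).
  { apply sym_par; auto.
    - apply (collinear3 n2); auto.
    - apply (perp_from_par n2); auto. apply dot_sub1; auto.
    - apply (collinear3 n3); auto.
    - apply (perp_from_par n3); auto. apply dot_sub1; auto. }
  assert (SP2: cross (psub (symmedian E2 E3 E1) E2) (psub (padd P3 P1) (pscale 2 E2)) = 0).
  { apply sym_par; auto.
    - apply (collinear3 n3); auto.
    - apply (perp_from_par n3); auto. apply dot_sub1; auto.
    - apply (collinear3 n1); auto.
    - apply (perp_from_par n1); auto. apply dot_sub1; auto. }
  rewrite sym_rot in SP2.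
  assert (Sy23: dot n2 P3 = dot n3 P2) by (apply normal_sym; lra).
  assert (Sy31: dot n3 P1 = dot n1 P3) by (apply normal_sym; lra).
  assert (Pa1: cross E1 (padd P2 P3) = 0).
  { apply (perp2_cross (psub n2 n3)).
    - apply normals_neq; auto; lra.
    - destruct n2, n3, E1; unfold dot, psub in *; cbn [fst snd] in *; lra.
    - destruct n2, n3, P2, P3; unfold dot, psub, padd in *; cbn [fst snd] in *; lra. }
  assert (Pa2: cross E2 (padd P3 P1) = 0).
  { apply (perp2_cross (psub n3 n1)).
    - apply normals_neq; auto; lra.
    - destruct n3, n1, E2; unfold dot, psub in *; cbn [fst snd] in *; lra.
    - destruct n3, n1, P3, P1; unfold dot, psub, padd in *; cbn [fst snd] in *; lra. }
  assert (W1: nz (psub (padd P2 P3) (pscale 2 E1))).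
  { unfold nz. destruct (Req_dec (fst (psub (padd P2 P3) (pscale 2 E1))) 0) as [A|A]; auto.
    destruct (Req_dec (snd (psub (padd P2 P3) (pscale 2 E1))) 0) as [B|B]; auto.
    exfalso. apply N23. apply (ell_eq a b Ha Hb); auto. fold n2.
    destruct n2 as [m1 m2], E1 as [e1 e2], P2 as [p1 p2], P3 as [q1 q2]; unfold dot, psub, padd, pscale in *; cbn [fst snd] in *.
    replace q1 with (2*e1-p1) by lra. replace q2 with (2*e2-p2) by lra. lra. }
  assert (W2: nz (psub (padd P3 P1) (pscale 2 E2))).
  { unfold nz. destruct (Req_dec (fst (psub (padd P3 P1) (pscale 2 E2))) 0) as [A|A]; auto.
    destruct (Req_dec (snd (psub (padd P3 P1) (pscale 2 E2))) 0) as [B|B]; auto.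
    exfalso. apply N31. apply (ell_eq a b Ha Hb); auto. fold n3.
    destruct n3 as [m1 m2], E2 as [e1 e2], P3 as [p1 p2], P1 as [q1 q2]; unfold dot, psub, padd, pscale in *; cbn [fst snd] in *.
    replace q1 with (2*e1-p1) by lra. replace q2 with (2*e2-p2) by lra. lra. }
  assert (K1: cross (symmedian E1 E2 E3) E1 = 0).
  { assert (cross (psub (symmedian E1 E2 E3) E1) E1 = 0).
    { apply (par_trans _ _ _ W1 SP1).
      destruct E1, P2, P3; unfold cross, psub, padd, pscale in *; cbn [fst snd] in *; lra. }
    destruct (symmedian E1 E2 E3), E1; unfold cross, psub in *; cbn [fst snd] in *; lra. }
  assert (K2: cross (symmedian E1 E2 E3) E2 = 0).
  { assert (cross (psub (symmedian E1 E2 E3) E2) E2 = 0).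
    { apply (par_trans _ _ _ W2 SP2).
      destruct E2, P3, P1; unfold cross, psub, padd, pscale in *; cbn [fst snd] in *; lra. }
    destruct (symmedian E1 E2 E3), E2; unfold cross, psub in *; cbn [fst snd] in *; lra. }
  assert (K0: symmedian E1 E2 E3 = (0,0)).
  { apply (zero_of_two _ E1 E2); auto.
    intro H. apply NE12. apply (line_par_eq n3); auto. }
  unfold is_cosine_circle. cbv zeta.
  rewrite F1, F2, F3, K0.
  assert (NZ32: nz (psub P3 P2)) by (unfold nz; apply pt_neq; auto).
  assert (NZ13: nz (psub P1 P3)) by (unfold nz; apply pt_neq; auto).
  assert (NZ21: nz (psub P2 P1)) by (unfold nz; apply pt_neq; auto).
  split; [reflexivity|].
  split; [apply (meets_lemma n3); auto|].
  split; [apply (meets_lemma n2); auto|].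
  split; [apply (meets_lemma n1); auto|].
  split; [apply (meets_lemma n3); auto|].
  split; [apply (meets_lemma n2); auto|].
  apply (meets_lemma n1); auto.
Qed.

Definition R0 (a b : R) : R := ((a*a+b*b) + 2*sqrt(a*a*(a*a) - a*a*(b*b) + b*b*(b*b)))/3.

Lemma delta_facts a b : 0 < b ->
  0 <= sqrt(a*a*(a*a) - a*a*(b*b) + b*b*(b*b)) /\
  sqrt(a*a*(a*a) - a*a*(b*b) + b*b*(b*b)) * sqrt(a*a*(a*a) - a*a*(b*b) + b*b*(b*b)) = a*a*(a*a) - a*a*(b*b) + b*b*(b*b).
Proof.
  intros Hb. split. apply sqrt_pos. apply sqrt_sqrt.
  pose proof (sq_nonneg (a*a - b*b/2)). pose proof (sq_nonneg (b*b)). nra.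
Qed.

Lemma R0_pos a b : 0 < b -> 0 < R0 a b.
Proof. intros Hb. unfold R0. destruct (delta_facts a b Hb) as [H1 H2].
  pose proof (sq_nonneg a). assert (0 < b*b) by nra. lra. Qed.

Lemma R0_gt a b : 0 < b -> b < a -> a*a < R0 a b.
Proof.
  intros Hb Hab. unfold R0. destruct (delta_facts a b Hb) as [H1 H2].
  set (d := sqrt (a * a * (a * a) - a * a * (b * b) + b * b * (b * b))) in *.
  assert (2*a*a - b*b < 2*d).
  { apply sq_lt. lra. assert (0 < b*b*(b*b)) by (assert (0<b*b) by nra; nra).
    replace (2*d*(2*d)) with (4*(d*d)) by ring. rewrite H2. nra. }
  lra.
Qed.

Lemma u_val a b u : 0 < b -> b < a -> 0 < u ->
  (a*a-b*b)*(a*a-b*b)*(u*u) + 2*(a*a+b*b)*u - 3 = 0 -> u * R0 a b = 1.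
Proof.
  intros Hb Hab Hu Hf.
  pose proof (R0_pos a b Hb) as HR0.
  destruct (delta_facts a b Hb) as [H1 H2].
  assert (HR: 3*R0 a b*R0 a b - 2*(a*a+b*b)*R0 a b - (a*a-b*b)*(a*a-b*b) = 0).
  { unfold R0. set (d := sqrt (a * a * (a * a) - a * a * (b * b) + b * b * (b * b))) in *.
    replace (3 * ((a * a + b * b + 2 * d) / 3) * ((a * a + b * b + 2 * d) / 3) -
      2 * (a * a + b * b) * ((a * a + b * b + 2 * d) / 3) - (a * a - b * b) * (a * a - b * b))
      with ((4*(d*d) - (a*a+b*b)*(a*a+b*b) - 3*((a*a-b*b)*(a*a-b*b)))/3) by field.
    rewrite H2. field. }
  set (R := R0 a b) in *. set (z := u*R).
  assert (F: (z-1)*((a*a-b*b)*(a*a-b*b)*(z+1) + 2*(a*a+b*b)*R) = 0).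
  { replace ((z-1)*((a*a-b*b)*(a*a-b*b)*(z+1) + 2*(a*a+b*b)*R)) with
      (R*R*((a*a-b*b)*(a*a-b*b)*(u*u) + 2*(a*a+b*b)*u - 3) + (3*R*R - 2*(a*a+b*b)*R - (a*a-b*b)*(a*a-b*b))) by (unfold z; ring).
    rewrite Hf, HR. ring. }
  apply Rmult_integral in F. destruct F as [F|F]; [lra|].
  exfalso.
  assert (0 < z) by (unfold z; apply Rmult_lt_0_compat; auto).
  assert (0 <= (a*a-b*b)*(a*a-b*b)) by apply sq_nonneg.
  assert (0 < (a*a+b*b)*R) by (apply Rmult_lt_0_compat; auto; assert (0 < b*b) by nra; pose proof (sq_nonneg a); lra).
  assert (0 <= (a*a-b*b)*(a*a-b*b)*(z+1)) by (apply Rmult_le_pos; lra).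
  lra.
Qed.

Lemma rot3 a b P1 P2 P3 : is_3_periodic a b P1 P2 P3 -> is_3_periodic a b P2 P3 P1.
Proof. intros (H1 & H2 & H3 & H4 & H5 & H6 & H7). repeat split; auto. apply nondeg_rot; auto. Qed.

Lemma t_sym a b P Q : 0 < a -> 0 < b -> on_ellipse a b P -> on_ellipse a b Q ->
  dot (ellipse_normal a b P) (psub Q P) = dot (ellipse_normal a b Q) (psub P Q).
Proof.
  intros Ha Hb HP HQ.
  pose proof (ell_self a b Ha Hb P HP). pose proof (ell_self a b Ha Hb Q HQ).
  pose proof (normal_sym a b Ha Hb P Q).
  destruct (ellipse_normal a b P), (ellipse_normal a b Q), P, Q; unfold dot, psub in *; cbn [fst snd] in *. lra.
Qed.

Lemma dot_psub_sq (P Q : pt) : dot (psub P Q) (psub P Q) = dist P Q * dist P Q.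
Proof. rewrite dist_sq. destruct P, Q; unfold dot, psub; cbn [fst snd]; ring. Qed.

Lemma sides a b P1 P2 P3 : 0 < b -> b < a -> is_3_periodic a b P1 P2 P3 ->
  exists u, u * R0 a b = 1 /\
   dot (ellipse_normal a b P1) (psub P2 P1) * dot (ellipse_normal a b P1) (psub P2 P1) = u * dot (psub P2 P1) (psub P2 P1) /\
   dot (ellipse_normal a b P1) (psub P3 P1) * dot (ellipse_normal a b P1) (psub P3 P1) = u * dot (psub P3 P1) (psub P3 P1) /\
   dot (ellipse_normal a b P2) (psub P3 P2) * dot (ellipse_normal a b P2) (psub P3 P2) = u * dot (psub P3 P2) (psub P3 P2).
Proof.
  intros Hb Hab H.
  assert (Ha: 0 < a) by lra.
  pose proof H as (Hnd & O1 & O2 & O3 & B1 & B2 & B3).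
  pose proof (nondeg_rot _ _ _ Hnd) as Hnd2.
  pose proof (vertex_cond _ _ _ _ _ Hnd B1) as V1.
  pose proof (vertex_cond _ _ _ _ _ Hnd2 B2) as V2.
  rewrite (t_sym a b P2 P1 Ha Hb O2 O1) in V2. rewrite (dist_sym P1 P2) in V2.
  pose proof (dist_pos _ _ (nondeg_neq1 _ _ _ Hnd)) as L12.
  pose proof (dist_pos _ _ (nondeg_neq2 _ _ _ Hnd)) as L13.
  pose proof (dist_pos _ _ (nondeg_neq1 _ _ _ Hnd2)) as L23.
  rewrite !dot_psub_sq.
  set (t12 := dot (ellipse_normal a b P1) (psub P2 P1)) in *.
  set (t13 := dot (ellipse_normal a b P1) (psub P3 P1)) in *.
  set (t23 := dot (ellipse_normal a b P2) (psub P3 P2)) in *.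
  set (l12 := dist P2 P1) in *. set (l13 := dist P3 P1) in *. set (l23 := dist P3 P2) in *.
  assert (Ht12: t12 <> 0).
  { intro E. apply (nondeg_neq1 _ _ _ Hnd). symmetry. apply (ell_eq a b Ha Hb); auto.
    pose proof (ell_self a b Ha Hb P1 O1). unfold t12 in E.
    destruct (ellipse_normal a b P1), P1, P2; unfold dot, psub in *; cbn [fst snd] in *; lra. }
  set (c := t12 / l12).
  assert (C13: t13 = c*l13) by (unfold c; apply (Rmult_eq_reg_r l12); [|lra]; field_simplify; lra).
  assert (C23: t23 = c*l23) by (unfold c; apply (Rmult_eq_reg_r l12); [|lra]; field_simplify; lra).
  assert (C12: t12 = c*l12) by (unfold c; field; lra).
  assert (Hc: c <> 0) by (intro E; rewrite E in C12; lra).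
  exists (c*c).
  split; [|rewrite C12, C13, C23; repeat split; ring].
  apply u_val; auto.
  { apply sqpos; auto. }
  pose proof (dist_sq P2 P1) as D12. pose proof (dist_sq P3 P1) as D13. pose proof (dist_sq P3 P2) as D23.
  fold l12 in D12. fold l13 in D13. fold l23 in D23.
  assert (Q12: t12*t12 = c*c*(l12*l12)) by (rewrite C12; ring).
  assert (Q13: t13*t13 = c*c*(l13*l13)) by (rewrite C13; ring).
  assert (Q23: t23*t23 = c*c*(l23*l23)) by (rewrite C23; ring).
  rewrite D12 in Q12. rewrite D13 in Q13. rewrite D23 in Q23.
  unfold t12, t13, t23 in *.
  pose proof (pt_neq _ _ (nondeg_neq1 _ _ _ Hnd)) as N12.
  pose proof (pt_neq _ _ (nondeg_neq2 _ _ _ Hnd)) as N13.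
  pose proof (pt_neq _ _ (nondeg_neq1 _ _ _ Hnd2)) as N23.
  clear -Hb Hab O1 O2 O3 Q12 Q13 Q23 N12 N13 N23 Hc.
  destruct P1 as [x1 y1], P2 as [x2 y2], P3 as [x3 y3].
  unfold on_ellipse, dot, psub, ellipse_normal in *; cbn [fst snd] in *.
  replace (a^2) with (a*a) in * by ring. replace (b^2) with (b*b) in * by ring.
  replace (x1^2) with (x1*x1) in * by ring. replace (y1^2) with (y1*y1) in * by ring.
  replace (x2^2) with (x2*x2) in * by ring. replace (y2^2) with (y2*y2) in * by ring.
  replace (x3^2) with (x3*x3) in * by ring. replace (y3^2) with (y3*y3) in * by ring.
  apply (closure a b (c*c) x1 y1 x2 y2 x3 y3); auto.
  apply sqpos; auto.
Qed.

Lemma fin (R u x y w : R) : u*R = 1 -> x*x = u*w -> (y = x \/ y = -x) -> w = R*(y*y).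
Proof. intros H1 H2 [E|E]; subst y.
  - replace (R*(x*x)) with (R*(u*w)) by (rewrite H2; ring). replace (R*(u*w)) with ((u*R)*w) by ring. rewrite H1; ring.
  - replace (R*(-x*-x)) with (R*(u*w)) by (rewrite <- H2; ring). replace (R*(u*w)) with ((u*R)*w) by ring. rewrite H1; ring.
Qed.

Lemma dot_psub_neg n P Q : dot n (psub P Q) = - dot n (psub Q P).
Proof. destruct n, P, Q; unfold dot, psub; cbn [fst snd]; ring. Qed.

Lemma dot_ww_sym P Q : dot (psub P Q) (psub P Q) = dot (psub Q P) (psub Q P).
Proof. destruct P, Q; unfold dot, psub; cbn [fst snd]; ring. Qed.

Theorem theorem4 (a b : R) (hb : 0 < b) (hab : b < a) :
  exists r : R, a < r /\
    forall P1 P2 P3 : pt, is_3_periodic a b P1 P2 P3 ->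
      is_cosine_circle (excenter P1 P2 P3) (excenter P2 P3 P1) (excenter P3 P1 P2)
        (0, 0) r.
Proof.
  assert (Ha: 0 < a) by lra.
  exists (sqrt (R0 a b)). split.
  - rewrite <- (sqrt_square a) at 1 by lra. apply sqrt_lt_1_alt. split.
    + pose proof (sq_nonneg a). lra.
    + apply R0_gt; auto.
  - intros P1 P2 P3 H.
    destruct (sides a b P1 P2 P3 hb hab H) as (u & Hu & T12 & T13 & T23).
    pose proof H as (Hnd & O1 & O2 & O3 & _).
    pose proof (rot3 _ _ _ _ _ H) as H2. pose proof (rot3 _ _ _ _ _ H2) as H3.
    pose proof (nondeg_rot _ _ _ Hnd) as Hnd2.
    destruct (exc_facts _ _ _ _ _ H) as (A1 & A2 & A3).
    destruct (exc_facts _ _ _ _ _ H2) as (B1 & B2 & B3).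
    destruct (exc_facts _ _ _ _ _ H3) as (C1 & C2 & C3).
    pose proof (R0_pos a b hb) as HR.
    apply (config a b P1 P2 P3); auto.
    + apply not_eq_sym. apply (nondeg_neq1 _ _ _ Hnd).
    + apply not_eq_sym. apply (nondeg_neq1 _ _ _ Hnd2).
    + apply (nondeg_neq2 _ _ _ Hnd).
    + apply (fin _ u _ _ _ Hu T23). right.
      rewrite dot_psub_neg. f_equal. apply t_sym; auto.
    + apply (fin _ u _ _ _ Hu T23). left. reflexivity.
    + rewrite dot_ww_sym. apply (fin _ u _ _ _ Hu T13). right.
      rewrite dot_psub_neg. reflexivity.
    + rewrite dot_ww_sym. apply (fin _ u _ _ _ Hu T13). left.
      apply t_sym; auto.
    + apply (fin _ u _ _ _ Hu T12). right.
      rewrite dot_psub_neg. f_equal. apply t_sym; auto.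
    + apply (fin _ u _ _ _ Hu T12). left. reflexivity.
Qed.
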